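(* Let $0<p<\infty$ and let $m,n\ge1$ be integers. Then there does not exist any continuous map $\tau:\mathbb{R}^m\to\mathbb{R}^n$ such that the composition operator $C_\tau f=f\circ\tau$ is bounded from $L^{p,\infty}(\mathbb{R}^n)$ to $L^\infty(\mathbb{R}^m)$.
   Context: $\mathbb{R}^n,\mathbb{R}^m$ carry Lebesgue measure $|\cdot|$. $L^{p,\infty}(\mathbb{R}^n)$ (weak $L^p$) consists of measurable $f$ with $\|f\|_{L^{p,\infty}}=\sup_{t>0}t\,|\{x:|f(x)|>t\}|^{1/p}<\infty$. Boundedness means $\|C_\tau f\|_{L^\infty(\mathbb{R}^m)}\le C\|f\|_{L^{p,\infty}(\mathbb{R}^n)}$ for some $C$ and all $f\in L^{p,\infty}(\mathbb{R}^n)$. *)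

(* Defs.v *)
(* R^n is modelled as 'rV[R]_n. *)
From HB Require Import structures.
From mathcomp Require Import all_boot all_order all_algebra.
From mathcomp Require Import all_classical all_reals all_analysis.
Set Implicit Arguments. Unset Strict Implicit. Unset Printing Implicit Defensive.
Import Order.TTheory GRing.Theory Num.Theory.
Import numFieldNormedType.Exports.
Local Open Scope classical_set_scope.
Local Open Scope ring_scope.

Section Defs.
Context {R : realType}.

Definition box n (a b : 'rV[R]_n) : set 'rV[R]_n :=
  [set x | forall i, a ord0 i <= x ord0 i <= b ord0 i].

Definition box_vol n (a b : 'rV[R]_n) : R := \prod_(i < n) (b ord0 i - a ord0 i).

Definition lebn n (A : set 'rV[R]_n) : \bar R :=
  ereal_inf [set (\sum_(0 <= k <oo) (box_vol (ab.1 k) (ab.2 k))%:E)%E |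
    ab in [set ab : (nat -> 'rV[R]_n) * (nat -> 'rV[R]_n) |
      (forall k i, ab.1 k ord0 i <= ab.2 k ord0 i) /\
      A `<=` \bigcup_k box (ab.1 k) (ab.2 k)]].

Definition leb_measurable n (A : set 'rV[R]_n) : Prop := (@lebn n).-caratheodory A.

Definition leb_measurable_fun n (f : 'rV[R]_n -> R) : Prop :=
  forall B : set R, measurable B -> leb_measurable (f @^-1` B).

Definition weakLp_norm n (p : R) (f : 'rV[R]_n -> R) : \bar R :=
  ereal_sup [set (t%:E * poweR (lebn [set x | (t < `|f x|)%R]) p^-1)%E | t in [set t : R | 0 < t]].

Definition weakLp n (p : R) (f : 'rV[R]_n -> R) : Prop :=
  leb_measurable_fun f /\ (weakLp_norm p f < +oo)%E.

Definition Linf_norm m (g : 'rV[R]_m -> R) : \bar R :=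
  ereal_inf [set M : \bar R | lebn [set x | M < (`|g x|)%:E]%E = 0%E].

Definition comp_bounded m n (p : R) (tau : 'rV[R]_m -> 'rV[R]_n) : Prop :=
  exists C : R, forall f : 'rV[R]_n -> R, weakLp p f ->
    (Linf_norm (f \o tau) <= C%:E * weakLp_norm p f)%E.
End Defs.

(* Main.v *)
Require Import Defs.
From HB Require Import structures.
From mathcomp Require Import all_boot all_order all_algebra.
From mathcomp Require Import all_classical all_reals all_analysis.
Import Order.TTheory GRing.Theory Num.Theory.
Import numFieldNormedType.Exports.
Local Open Scope classical_set_scope.
Local Open Scope ring_scope.
From mathcomp Require Import measurable_realfun lebesgue_integral.
From mathcomp Require Import lra.

Section A.
Context {R : realType}.
Local Open Scope ereal_scope.

Lemma box_vol_ge0 n (a b : 'rV[R]_n) : (forall i, a ord0 i <= b ord0 i)%R ->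
  (0 <= box_vol a b)%R.
Proof. by move=> h; apply: prodr_ge0 => i _; rewrite subr_ge0. Qed.

Lemma lebn_ge0 n (A : set 'rV[R]_n) : 0 <= lebn A.
Proof.
apply: le_ereal_inf_tmp => _ [ab [hab _] <-].
apply: nneseries_ge0 => k _ _; rewrite lee_fin; exact: box_vol_ge0.
Qed.

Lemma lebn_le n (A B : set 'rV[R]_n) : A `<=` B -> lebn A <= lebn B.
Proof.
move=> AB; apply: ereal_inf_le_tmp => _ [ab [hab hB] <-].
by exists ab => //; split => //; apply: subset_trans hB.
Qed.

Lemma lebn_cover n (A : set 'rV[R]_n) (a b : nat -> 'rV[R]_n) :
  (forall k i, (a k ord0 i <= b k ord0 i)%R) ->
  A `<=` \bigcup_k box (a k) (b k) ->
  lebn A <= \sum_(0 <= k <oo) (box_vol (a k) (b k))%:E.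
Proof. by move=> h1 h2; apply: ereal_inf_lbound; exists (a, b). Qed.

End A.

Section B.
Context {R : realType}.
Local Open Scope ereal_scope.

Definition ilv {T} (v w : nat -> T) k := if odd k then w k./2 else v k./2.

Lemma sum_ilv (v w : nat -> \bar R) n :
  \sum_(0 <= k < n.*2) ilv v w k = \sum_(0 <= k < n) v k + \sum_(0 <= k < n) w k.
Proof.
elim: n => [|n IH]; first by rewrite !big_geq// adde0.
rewrite doubleS !big_nat_recr//= IH /ilv odd_double /= doubleK.
by rewrite odd_double /= uphalf_double -addrA addrACA.
Qed.

Lemma ilv_le (v w : nat -> \bar R) : (forall k, 0 <= v k) -> (forall k, 0 <= w k) ->
  \sum_(0 <= k <oo) ilv v w k <= \sum_(0 <= k <oo) v k + \sum_(0 <= k <oo) w k.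
Proof.
move=> v0 w0.
have u0 : forall k, 0 <= ilv v w k by move=> k; rewrite /ilv; case: ifP.
apply: lime_le; first exact: is_cvg_nneseries.
apply: nearW => N.
apply: (@le_trans _ _ (\sum_(0 <= k < N.*2) ilv v w k)).
  apply: (ereal_nondecreasing_series (fun n _ _ => u0 n)).
  by rewrite -addnn leq_addr.
rewrite sum_ilv; apply: leeD; exact: nneseries_lim_ge.
Qed.

Lemma lebn_U n (A B : set 'rV[R]_n) : lebn (A `|` B) <= lebn A + lebn B.
Proof.
have [Ay|Afin] := eqVneq (lebn A) +oo.
  by rewrite Ay addye ?leey// gt_eqF// (lt_le_trans _ (lebn_ge0 _ _)).
have [By|Bfin] := eqVneq (lebn B) +oo.
  by rewrite By addey ?leey// gt_eqF// (lt_le_trans _ (lebn_ge0 _ _)).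
have Af : lebn A \is a fin_num by rewrite ge0_fin_numE ?lebn_ge0// ltey.
have Bf : lebn B \is a fin_num by rewrite ge0_fin_numE ?lebn_ge0// ltey.
apply/lee_addgt0Pr => e e0.
have e20 : (0 < e / 2)%R by rewrite divr_gt0.
have [_ [[a1 b1] [h1 c1] <-] lt1] := lb_ereal_inf_adherent e20 Af.
have [_ [[a2 b2] [h2 c2] <-] lt2] := lb_ereal_inf_adherent e20 Bf.
rewrite /= in h1 c1 h2 c2 lt1 lt2.
apply: (@le_trans _ _ (\sum_(0 <= k <oo) ilv (fun k => (box_vol (a1 k) (b1 k))%:E)
                          (fun k => (box_vol (a2 k) (b2 k))%:E) k)).
  have -> : ilv (fun k => (box_vol (a1 k) (b1 k))%:E) (fun k => (box_vol (a2 k) (b2 k))%:E)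
      = fun k => (box_vol (ilv a1 a2 k) (ilv b1 b2 k))%:E.
    by apply/funext => k; rewrite /ilv; case: ifP.
  apply: lebn_cover.
    by move=> k i; rewrite /ilv; case: ifP.
  move=> x [/c1 [k _ hk]|/c2 [k _ hk]].
    by exists k.*2 => //; rewrite /ilv odd_double doubleK.
  exists k.*2.+1 => //; rewrite /ilv /= odd_double /=.
  by rewrite uphalf_double.
apply: le_trans; first (apply: ilv_le => k; rewrite lee_fin; exact: box_vol_ge0).
rewrite [e%:E](_ : _ = (e/2)%:E + (e/2)%:E); last by rewrite -EFinD -splitr.
rewrite addeACA; apply: leeD; exact: ltW.
Qed.

End B.

Section C.
Context {R : realType}.
Local Open Scope ereal_scope.
Implicit Types n : nat.

Lemma carat_split n (A : set 'rV[R]_n) :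
  (forall X, lebn (X `&` A) + lebn (X `&` ~` A) <= lebn X) -> leb_measurable A.
Proof.
move=> h X; apply/le_anti; rewrite h andbT.
apply: le_trans (lebn_U _ _ _).
apply: lebn_le => x Xx; have [Ax|nAx] := pselect (A x); [left|right]; by split.
Qed.

Lemma caratC n (A : set 'rV[R]_n) : leb_measurable A -> leb_measurable (~` A).
Proof. by move=> h X; rewrite setCK addeC. Qed.

Lemma caratI n (A1 A2 : set 'rV[R]_n) : leb_measurable A1 -> leb_measurable A2 ->
  leb_measurable (A1 `&` A2).
Proof.
move=> h1 h2 X.
rewrite (h1 X) (h2 (X `&` A1)) (h1 (X `&` ~` (A1 `&` A2))).
have -> : X `&` ~` (A1 `&` A2) `&` A1 = X `&` A1 `&` ~` A2.
  apply/seteqP; split => x /=.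
    by move=> [[Xx nA] A1x]; split => // A2x; apply: nA.
  by move=> [[Xx A1x] nA2]; split => //; split => // -[].
have -> : X `&` ~` (A1 `&` A2) `&` ~` A1 = X `&` ~` A1.
  apply/seteqP; split => x /=; first by move=> [[]].
  by move=> [Xx nA1]; split => //; split => // -[].
by rewrite setIA addeA.
Qed.

Lemma lebn0 n : (0 < n)%N -> lebn (@set0 'rV[R]_n) = 0.
Proof.
move=> n0; apply/le_anti; rewrite lebn_ge0 andbT.
apply: le_trans; first exact: (@lebn_cover R n set0 (fun _ => 0%R) (fun _ => 0%R) (fun _ _ => lexx _) (sub0set _)).
rewrite eseries0// => k _ _.
by rewrite /box_vol (bigD1 (Ordinal n0)) //= subrr mul0r.
Qed.

Lemma caratT n : (0 < n)%N -> leb_measurable (@setT 'rV[R]_n).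
Proof. by move=> n0 X; rewrite setIT setCT setI0 lebn0// adde0. Qed.

Lemma carat0 n : (0 < n)%N -> leb_measurable (@set0 'rV[R]_n).
Proof. by move=> n0; rewrite -setCT; apply: caratC; apply: caratT. Qed.

Definition repl n (v : 'rV[R]_n) (i : 'I_n) (c : R) : 'rV[R]_n :=
  \row_j (if j == i then c else v ord0 j).
Arguments repl {n}.

Lemma repl_vol n (a b : 'rV[R]_n) i c : (a ord0 i <= c <= b ord0 i)%R ->
  (box_vol a (repl b i c) + box_vol (repl a i c) b = box_vol a b)%R.
Proof.
move=> _; rewrite /box_vol (bigD1 i)//= [X in (_ + X)%R](bigD1 i)//=.
rewrite [X in (_ = X)%R](bigD1 i)//= !mxE eqxx.
have e1 : (\prod_(j < n | j != i) (repl b i c ord0 j - a ord0 j) =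
          \prod_(j < n | j != i) (b ord0 j - a ord0 j))%R.
  by apply: eq_bigr => j /negbTE ji; rewrite mxE ji.
have e2 : (\prod_(j < n | j != i) (b ord0 j - repl a i c ord0 j) =
          \prod_(j < n | j != i) (b ord0 j - a ord0 j))%R.
  by apply: eq_bigr => j /negbTE ji; rewrite mxE ji.
rewrite e1 e2 -mulrDl; congr (_ * _)%R; rewrite addrC addrA subrK //.
Qed.

Lemma carat_half n (H : set 'rV[R]_n) (i : 'I_n) (c : R) :
  (forall x : 'rV[R]_n, (x ord0 i < c)%R -> H x) -> (forall x : 'rV[R]_n, H x -> (x ord0 i <= c)%R) ->
  leb_measurable H.
Proof.
move=> hl hr; apply: carat_split => X.
apply: le_ereal_inf_tmp => _ [[a b] [hab hX] <-]; rewrite /= in hab hX *.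
pose c' k := Order.min (b k ord0 i) (Order.max (a k ord0 i) c).
have hc k : (a k ord0 i <= c' k <= b k ord0 i)%R.
  by rewrite /c' le_min ge_min le_max lexx hab /= lexx.
have L1 : lebn (X `&` H) <= \sum_(0 <= k <oo) (box_vol (a k) (repl (b k) i (c' k)))%:E.
  apply: lebn_cover.
  - move=> k j; rewrite mxE; case: eqP => [->|_]; first by case/andP: (hc k).
    exact: hab.
  - move=> x [/hX [k _ hk] Hx]; exists k => // j; rewrite mxE.
    case: eqP => [->|_]; last exact: hk.
    have /andP[-> xb] := hk i.
    by rewrite /c' le_min xb le_max (hr _ Hx) orbT.
have L2 : lebn (X `&` ~` H) <= \sum_(0 <= k <oo) (box_vol (repl (a k) i (c' k)) (b k))%:E.
  apply: lebn_cover.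
  - move=> k j; rewrite mxE; case: eqP => [->|_]; first by case/andP: (hc k).
    exact: hab.
  - move=> x [/hX [k _ hk] Hx]; exists k => // j; rewrite mxE.
    case: eqP => [->|_]; last exact: hk.
    have /andP[ax ->] := hk i; rewrite andbT.
    rewrite /c' ge_min ge_max ax /= orbC /=.
    by apply/orP; left; rewrite leNgt; apply/negP => /hl.
apply: le_trans (leeD L1 L2) _.
rewrite -nneseriesD; last 2 first.
- move=> k _ _; rewrite lee_fin; apply: box_vol_ge0 => j; rewrite mxE.
  by case: eqP => [->|_]; [case/andP: (hc k)|exact: hab].
- move=> k _ _; rewrite lee_fin; apply: box_vol_ge0 => j; rewrite mxE.
  by case: eqP => [->|_]; [case/andP: (hc k)|exact: hab].
rewrite le_eqVlt; apply/orP; left; apply/eqP; apply: eq_eseriesr => k _.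
by rewrite -EFinD repl_vol.
Qed.

Lemma carat_box n (a b : 'rV[R]_n) : (0 < n)%N -> leb_measurable (box a b).
Proof.
move=> n0.
suff h : forall s : seq 'I_n, leb_measurable
    [set x : 'rV[R]_n | forall i, i \in s -> (a ord0 i <= x ord0 i <= b ord0 i)%R].
  have -> : box a b = [set x : 'rV[R]_n | forall i, i \in enum 'I_n ->
                (a ord0 i <= x ord0 i <= b ord0 i)%R].
    by apply/seteqP; split => x /= hx i; [move=> _; exact: hx|apply: hx; rewrite mem_enum].
  exact: h.
elim => [|i s IH].
  have -> : [set x : 'rV[R]_n | forall i, i \in [::] -> (a ord0 i <= x ord0 i <= b ord0 i)%R]
     = setT by apply/seteqP; split => x //= _ i.
  exact: caratT.
have -> : [set x : 'rV[R]_n | forall j, j \in i :: s -> (a ord0 j <= x ord0 j <= b ord0 j)%R]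
   = (~` [set x : 'rV[R]_n | (x ord0 i < a ord0 i)%R] `&` [set x : 'rV[R]_n | (x ord0 i <= b ord0 i)%R]) `&`
     [set x : 'rV[R]_n | forall j, j \in s -> (a ord0 j <= x ord0 j <= b ord0 j)%R].
  apply/seteqP; split => x /=.
    move=> h; have /andP[h1 h2] := h i (mem_head _ _).
    split; [split=> //; apply/negP; rewrite -leNgt; exact: h1|move=> j js; apply: h; by rewrite in_cons js orbT].
  move=> [[h1 h2] h3] j; rewrite in_cons => /orP[/eqP ->|/h3//].
  by rewrite h2 andbT leNgt; apply/negP.
apply: caratI => //; apply: caratI.
  by apply: caratC; apply: (@carat_half n _ i (a ord0 i)) => // x /ltW.
by apply: (@carat_half n _ i (b ord0 i)) => // x /ltW.
Qed.

End C.

Section D.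
Context {R : realType}.
Local Open Scope ereal_scope.

Lemma in_itvcc_set (a b t : R) : (t \in (`[a, b]%classic : set R)) = (a <= t <= b)%R.
Proof. by apply/idP/idP; rewrite in_setE /= in_itv. Qed.

Lemma leb_itvcc (a b : R) : (a <= b)%R ->
  lebesgue_measure (`[a, b]%classic : set R) = (b - a)%:E.
Proof.
move=> ab; rewrite lebesgue_measure_itv /=; case: ltP => [_|ba]; first by rewrite EFinB.
have -> : a = b by apply/le_anti; rewrite ab -lee_fin ba.
by rewrite subrr.
Qed.

Lemma term_le_series (u : nat -> \bar R) k : (forall k, 0 <= u k) ->
  u k <= \sum_(0 <= i <oo) u i.
Proof.
move=> u0; apply: le_trans (nneseries_lim_ge k.+1 (fun n _ _ => u0 n)).
rewrite big_nat_recr//= leeDr//; exact: sume_ge0.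
Qed.

Definition cterm (P : nat -> bool) (V : nat -> R) k : R := if P k then V k else 0%R.

Lemma cover_lb (m : nat) : forall (lo hi : 'I_m -> R) (a b : nat -> 'I_m -> R) (P : nat -> bool),
  (forall i, (lo i <= hi i)%R) -> (forall k i, (a k i <= b k i)%R) ->
  (forall x : 'I_m -> R, (forall i, (lo i <= x i <= hi i)%R) ->
     exists k, P k /\ forall i, (a k i <= x i <= b k i)%R) ->
  (\prod_(i < m) (hi i - lo i))%:E <=
    \sum_(0 <= k <oo) (cterm P (fun k => \prod_(i < m) (b k i - a k i)) k)%:E.
Proof.
elim: m => [|m IH] lo hi a b P hlh hab hcov.
  have [k [Pk _]] := hcov lo (fun i => match i with Ordinal _ h => False_ind _ (notF h) end).
  rewrite big_ord0; apply: le_trans (term_le_series _ k _).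
    by rewrite /cterm Pk big_ord0.
  by move=> j; rewrite /cterm; case: ifP => // _; rewrite lee_fin; apply: prodr_ge0 => i _; rewrite subr_ge0.
pose V k := (\prod_(j < m) (b k (lift ord0 j) - a k (lift ord0 j)))%R.
have V0 k : (0 <= V k)%R by apply: prodr_ge0 => j _; rewrite subr_ge0.
pose I k := (`[a k ord0, b k ord0]%classic : set R).
pose c k : R := cterm P V k.
have c0 k : (0 <= c k)%R by rewrite /c /cterm; case: ifP.
pose term k (t : R) := (c k * \1_(I k) t)%:E.
have term0 k t : 0 <= term k t by rewrite lee_fin mulr_ge0.
pose D := (`[lo ord0, hi ord0]%classic : set R).
have mD : measurable D by exact: measurable_itv.
have mterm k : measurable_fun D (term k).
  apply/measurable_EFinP; apply: measurable_funM; first exact: measurable_cst.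
  by apply: measurable_indic; exact: measurable_itv.
pose Q := (\prod_(j < m) (hi (lift ord0 j) - lo (lift ord0 j)))%R.
have Q0 : (0 <= Q)%R by apply: prodr_ge0 => j _; rewrite subr_ge0.
have slice t : D t -> Q%:E <= \sum_(0 <= k <oo) term k t.
  move=> Dt.
  have -> : \sum_(0 <= k <oo) term k t = \sum_(0 <= k <oo) (cterm (fun k => P k && (a k ord0 <= t <= b k ord0)%R)
      (fun k => \prod_(j < m) (b k (lift ord0 j) - a k (lift ord0 j))) k)%:E.
    apply: eq_eseriesr => k _; rewrite /term /c /cterm indicE /I in_itvcc_set.
    by case: (P k); case: (_ && _); rewrite ?mulr1 ?mulr0.
  apply: (IH (fun j => lo (lift ord0 j)) (fun j => hi (lift ord0 j))
             (fun k j => a k (lift ord0 j)) (fun k j => b k (lift ord0 j))) => //.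
  move=> y hy.
  pose x (i : 'I_m.+1) := if unlift ord0 i is Some j then y j else t.
  have [k [Pk hk]] : exists k, P k /\ forall i, (a k i <= x i <= b k i)%R.
    apply: hcov => i; rewrite /x; case: unliftP => [j ->|->]; first exact: hy.
    by move: Dt; rewrite /D /= in_itv.
  exists k; split.
    have := hk ord0; rewrite /x unlift_none => ->; by rewrite Pk.
  by move=> j; have := hk (lift ord0 j); rewrite /x liftK.
have LHS : (\prod_(i < m.+1) (hi i - lo i))%:E = \int[lebesgue_measure]_(t in D) (cst Q%:E) t.
  rewrite integral_cst//; transitivity (Q%:E * (hi ord0 - lo ord0)%:E); last first.
    congr (_ * _); symmetry; rewrite /D; apply: leb_itvcc; exact: hlh.
  by rewrite big_ord_recl -EFinM mulrC.
rewrite LHS.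
apply: le_trans.
  apply: (@ge0_le_integral _ _ _ lebesgue_measure _ mD _ (fun t => \sum_(0 <= k <oo) term k t)).
  - by move=> t _; rewrite lee_fin.
  - exact: measurable_cst.
  - exact: (@ge0_emeasurable_sum _ _ _ D term predT (fun k t _ _ => term0 k t) (fun k _ => mterm k)).
  - exact: slice.
rewrite integral_nneseries//.
apply: lee_nneseries => [k _ _|k _]; first by apply: integral_ge0 => t _.
have -> : \int[lebesgue_measure]_(x in D) term k x =
    (c k)%:E * \int[lebesgue_measure]_(x in D) (\1_(I k) x)%:E.
  rewrite -ge0_integralZl_EFin//.
  by apply: measurableT_comp => //; apply: measurable_indic; exact: measurable_itv.
apply: (@le_trans _ _ ((c k)%:E * lebesgue_measure (I k `&` D))).
  rewrite le_eqVlt; apply/orP; left; apply/eqP; congr (_ * _).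
  by apply: integral_indic => //; exact: measurable_itv.
rewrite /c /cterm; case: (P k); last by rewrite mul0e.
rewrite big_ord_recl.
rewrite EFinM -/(V k) [X in _ <= X]muleC; apply: lee_wpmul2l; first by rewrite lee_fin.
apply: (@le_trans _ _ (lebesgue_measure (I k))).
  by apply: measureIl; exact: measurable_itv.
rewrite le_eqVlt; apply/orP; left; apply/eqP; rewrite /I; apply: leb_itvcc; exact: hab.
Qed.

End D.

Section E.
Context {R : realType}.
Local Open Scope ereal_scope.

Lemma lebn_le_box n (A : set 'rV[R]_n) (lo hi : 'rV[R]_n) : (0 < n)%N ->
  (forall i, (lo ord0 i <= hi ord0 i)%R) -> A `<=` box lo hi ->
  lebn A <= (box_vol lo hi)%:E.
Proof.
move=> n0 lohi Ab.
apply: le_trans.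
  apply: (@lebn_cover R n A (fun _ => lo) (fun k => if k == 0%N then hi else lo)).
    by move=> [|k] i //=.
  by move=> x /Ab Bx; exists 0%N.
rewrite (nneseries_split 0 1); last first.
  move=> [|k] _; rewrite lee_fin; apply: box_vol_ge0 => i //=.
rewrite big_nat1 /= eseries0 ?adde0// => -[|k]// _ _.
by rewrite /box_vol (bigD1 (Ordinal n0)) //= subrr mul0r.
Qed.

Lemma lebn_box_ge m (lo hi : 'rV[R]_m) :
  (forall i, (lo ord0 i <= hi ord0 i)%R) -> (box_vol lo hi)%:E <= lebn (box lo hi).
Proof.
move=> lohi; apply: le_ereal_inf_tmp => _ [ab [hab hc] <-]; case: ab hab hc => a b /= hab hc.
have := @cover_lb R m (fun i => lo ord0 i) (fun i => hi ord0 i) (fun k i => a k ord0 i)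
  (fun k i => b k ord0 i) (fun _ => true) lohi hab.
apply.
move=> x hx; have hx' : box lo hi (\row_i x i) by move=> i; rewrite mxE; exact: hx.
have [k _ hk] := hc _ hx'.
by exists k; split => // i; have := hk i; rewrite mxE.
Qed.

End E.


Theorem proposition5p5 (R : realType) (p : R) (m n : nat) :
  0 < p -> (1 <= m)%N -> (1 <= n)%N ->
  ~ (exists tau : 'rV[R]_m -> 'rV[R]_n,
       continuous tau /\ comp_bounded p tau).
Proof.
move=> p0 m1 n1 [tau [ctau [C hC]]].
pose K : R := `|C| + 1.
have K0 : 0 < K by rewrite /K ltr_pwDr.
pose s : R := K `^ (- (p / n%:R)).
have s0 : 0 < s by rewrite /s powR_gt0.
pose r : R := s / 2.
have r0 : 0 < r by rewrite /r divr_gt0.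
pose y0 := tau 0.
pose lo : 'rV[R]_n := \row_i (y0 ord0 i - r).
pose hi : 'rV[R]_n := \row_i (y0 ord0 i + r).
have lohi : forall i, lo ord0 i <= hi ord0 i by move=> i; rewrite !mxE; lra.
pose B := box lo hi.
have volB : box_vol lo hi = s ^+ n.
  rewrite /box_vol (eq_bigr (fun _ => s)); first by rewrite prodr_const card_ord.
  by move=> i _; rewrite !mxE /r; lra.
have pw : (s ^+ n) `^ p^-1 = K^-1.
  rewrite -powR_mulrn ?(ltW s0)// /s -powRrM -powRrM.
  have -> : (- (p / n%:R) * (n%:R / p) = -1)%R.
    have nn0 : (n%:R : R) != 0 by rewrite pnatr_eq0 -lt0n.
    by rewrite mulNr mulrA divfK// mulfV ?gt_eqF.
  by rewrite powR_inv1// ltW.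
pose f (y : 'rV[R]_n) : R := if pselect (B y) is left _ then K else 0.
have fB y : B y -> f y = K by rewrite /f; case: pselect.
have fnB y : ~ B y -> f y = 0 by rewrite /f; case: pselect.
have fmeas : leb_measurable_fun f.
  move=> S _.
  have [SK|nSK] := pselect (S K); have [S0|nS0] := pselect (S 0).
  - have -> : f @^-1` S = setT.
      apply/seteqP; split => y // _; rewrite /preimage /=.
      by have [/fB ->|/fnB ->] := pselect (B y).
    exact: caratT.
  - have -> : f @^-1` S = B.
      apply/seteqP; split => y; rewrite /preimage /=.
        by have [//|/fnB ->] := pselect (B y).
      by move/fB ->.
    exact: carat_box.
  - have -> : f @^-1` S = ~` B.
      apply/seteqP; split => y; rewrite /preimage /=.
        by have [/fB ->|//] := pselect (B y).
      by move/fnB ->.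
    by apply: caratC; exact: carat_box.
  - have -> : f @^-1` S = set0.
      apply/seteqP; split => y; rewrite /preimage //=.
      by have [/fB ->|/fnB ->] := pselect (B y).
    exact: carat0.
have hnorm : (weakLp_norm p f <= 1)%E.
  apply: ge_ereal_sup => _ [t t0 <-]; rewrite /= in t0.
  have [tK|Kt] := ltP t K.
    have L : (lebn [set x : 'rV[R]_n | (t < `|f x|)%R] <= (s ^+ n)%:E)%E.
      rewrite -volB; apply: lebn_le_box => // y /= ty.
      have [//|/fnB fy] := pselect (B y).
      by move: ty; rewrite fy normr0 ltNge (ltW t0).
    have x0 := lebn_ge0 _ [set y : 'rV[R]_n | t < `|f y|].
    move: (lebn [set y : 'rV[R]_n | t < `|f y|]) x0 L => x x0 xL.
    have /fineK <- : x \is a fin_num.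
      by rewrite ge0_fin_numE// (le_lt_trans xL) ?ltry.
    rewrite poweR_EFin -EFinM lee_fin.
    apply: (@le_trans _ _ (K * (s ^+ n) `^ p^-1)).
      apply: ler_pM; [exact: ltW|exact: powR_ge0|exact: ltW|].
      apply: ge0_ler_powR; rewrite ?invr_ge0 ?(ltW p0)//.
      - by rewrite nnegrE fine_ge0.
      - by rewrite nnegrE exprn_ge0// ltW.
      - by rewrite -lee_fin fineK// ge0_fin_numE// (le_lt_trans xL) ?ltry.
    by rewrite pw mulfV// gt_eqF.
  have -> : [set x | t < `|f x|] = set0.
    apply/seteqP; split => y //=.
    have [/fB ->|/fnB ->] := pselect (B y).
      by rewrite gtr0_norm// ltNge Kt.
    by rewrite normr0 ltNge (ltW t0).
  by rewrite lebn0// poweR0r ?invr_neq0 ?gt_eqF// mule0 lee01.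
have hw0 : (0 <= weakLp_norm p f)%E.
  apply: le_ereal_sup_tmp; exists ((1%:E * poweR (lebn [set x : 'rV[R]_n | (1 < `|f x|)%R]) p^-1)%E).
    by exists 1%R; [rewrite /= ltr01|].
  by rewrite mule_ge0// poweR_ge0.
have hwLp : weakLp p f by split => //; apply: le_lt_trans hnorm _; exact: ltry.
have hup := hC f hwLp.
have hup2 : (C%:E * weakLp_norm p f <= `|C|%:E)%E.
  move: (weakLp_norm p f) hw0 hnorm => w w0 w1.
  have /fineK <- : w \is a fin_num.
    by rewrite ge0_fin_numE// (le_lt_trans w1) ?ltry.
  rewrite -EFinM lee_fin.
  have fw0 : 0 <= fine w by rewrite fine_ge0.
  have fw1 : fine w <= 1 by rewrite -lee_fin fineK// ge0_fin_numE// (le_lt_trans w1) ?ltry.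
  apply: (@le_trans _ _ (`|C| * fine w)); first by apply: ler_wpM2r => //; exact: ler_norm.
  by rewrite ler_piMr.
have hlow : (K%:E <= Linf_norm (f \o tau))%E.
  apply: le_ereal_inf_tmp => M /= hM.
  rewrite leNgt; apply/negP => MK.
  have /nbhs_ballP [d /= d0 hd] := ctau 0 _ (nbhsx_ballx (tau 0) r r0).
  pose qlo : 'rV[R]_m := \row_i (- (d / 2)).
  pose qhi : 'rV[R]_m := \row_i (d / 2).
  have qlh : forall i, qlo ord0 i <= qhi ord0 i.
    by move=> i; rewrite !mxE; have := d0; lra.
  have sub : box qlo qhi `<=` [set x | (M < (`|(f \o tau) x|)%:E)%E].
    move=> x hx /=.
    have bx : ball (0 : 'rV[R]_m) d x.
      split => // i j; rewrite ord1 /ball /= mxE sub0r normrN.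
      have := hx j; rewrite !mxE => /andP[h1 h2].
      rewrite ltr_norml; apply/andP; split; lra.
    have := hd _ bx; rewrite /preimage /= => bt.
    have Bt : B (tau x).
      move=> j; rewrite !mxE; have := bt.2 ord0 j; rewrite /ball /= ltr_distlC.
      by move=> /andP[h1 h2]; rewrite (ltW h1) (ltW h2).
    by rewrite fB// gtr0_norm.
  have := le_trans (lebn_box_ge _ _ _ qlh) (lebn_le _ _ _ sub).
  rewrite hM lee_fin leNgt => /negP; apply.
  by apply: prodr_gt0 => i _; rewrite !mxE; lra.
have := le_trans hlow (le_trans hup hup2).
by rewrite lee_fin /K leNgt ltrDl ltr01.
Qed.
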